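(* Let $C(\cdot,t)$, $t\in[0,T)$, be a smooth family of closed curves in $\mathbb{R}^2$ with centro-affine arc-length $\xi$ and centro-affine curvature $\varphi$, and suppose $\varphi$ satisfies $$\frac{\partial\varphi}{\partial t}=\frac12\varphi_{\xi\xi}-\frac12\varphi^3+2\varphi$$ for $t\in[0,T)$. Then $\varphi$ is bounded on $[0,T)$; more precisely, $$\min\{-2,\varphi_{\min}(0)\}\le\varphi(p,t)\le\max\{2,\varphi_{\max}(0)\},$$ where $\varphi_{\max}(t)=\sup_p\varphi(p,t)$ and $\varphi_{\min}(t)=\inf_p\varphi(p,t)$.
   Context: For $u,v\in\mathbb{R}^2$, $[u,v]$ denotes the determinant of the matrix with columns $u,v$. Each curve $C(\cdot,t):S^1\to\mathbb{R}^2$ is smooth, closed, with $[C,C_p]\neq0$, $[C_p,C_{pp}]\neq0$ (then $[C_p,C_{pp}]/[C,C_p]>0$). The centro-affine metric is $g=\sqrt{[C_p,C_{pp}]/[C,C_p]}$, centro-affine arc-length $\xi(p)=\int_{p_0}^p g\,dp$ (so $\partial_\xi=g^{-1}\partial_p$), and centro-affine curvature $\varphi=[C_{\xi\xi},C]/[C_\xi,C]$. *)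

(* Defs.v *)
From Stdlib Require Import Reals List.
From Coquelicot Require Export Coquelicot.
Open Scope R_scope.

Definition det2 (u v : R * R) : R := fst u * snd v - snd u * fst v.

(* iterated partial derivatives of a scalar function f(p,t):
   true = derivative in p, false = derivative in t *)
Fixpoint pd (l : list bool) (f : R -> R -> R) : R -> R -> R :=
  match l with
  | nil => f
  | b :: l' =>
      if b then (fun p t => Derive (fun q => pd l' f q t) p)
      else (fun p t => Derive (fun s => pd l' f p s) t)
  end.

Definition smooth_on (U : R -> R -> Prop) (f : R -> R -> R) : Prop :=
  forall (l : list bool) (p t : R), U p t ->
    ex_derive (fun q => pd l f q t) p /\
    ex_derive (fun s => pd l f p s) t /\
    continuous (fun z : R * R => pd l f (fst z) (snd z)) (p, t).

Definition dpv (C : R -> R -> R * R) (p t : R) : R * R :=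
  (Derive (fun q => fst (C q t)) p, Derive (fun q => snd (C q t)) p).
Definition dppv (C : R -> R -> R * R) (p t : R) : R * R :=
  (Derive (fun q => fst (dpv C q t)) p, Derive (fun q => snd (dpv C q t)) p).

Definition ca_metric (C : R -> R -> R * R) (p t : R) : R :=
  sqrt (det2 (dpv C p t) (dppv C p t) / det2 (C p t) (dpv C p t)).

Definition dxi (C : R -> R -> R * R) (f : R -> R -> R) (p t : R) : R :=
  Derive (fun q => f q t) p / ca_metric C p t.

Definition Cxi (C : R -> R -> R * R) (p t : R) : R * R :=
  (dxi C (fun q s => fst (C q s)) p t, dxi C (fun q s => snd (C q s)) p t).
Definition Cxixi (C : R -> R -> R * R) (p t : R) : R * R :=
  (dxi C (fun q s => fst (Cxi C q s)) p t, dxi C (fun q s => snd (Cxi C q s)) p t).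

Definition ca_curv (C : R -> R -> R * R) (p t : R) : R :=
  det2 (Cxixi C p t) (C p t) / det2 (Cxi C p t) (C p t).

Definition Rbar_max' (x y : Rbar) : Rbar :=
  match Rbar_le_dec x y with left _ => y | right _ => x end.

(* Main.v *)
Require Import Defs.
From Stdlib Require Import Reals.
From Coquelicot Require Import Coquelicot.
From Stdlib Require Import Lra Lia List ClassicalEpsilon ZArith.
Open Scope R_scope.

Fixpoint Sm (n : nat) (f : R -> R) : Prop :=
  (forall x, ex_derive f x) /\
  match n with O => True | S n' => Sm n' (Derive f) end.
Definition Sinf (f : R -> R) := forall n, Sm n f.
Definition Per (f : R -> R) := forall x, f (x + 1) = f x.
Definition Good (f : R -> R) := Sinf f /\ Per f.

Lemma Sm_ext n : forall f g, (forall x, f x = g x) -> Sm n f -> Sm n g.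
Proof.
  induction n as [|n IH]; intros f g E [H1 H2]; split.
  - intro x; apply (ex_derive_ext f); auto.
  - exact I.
  - intro x; apply (ex_derive_ext f); auto.
  - apply (IH (Derive f)); auto. intro x; apply Derive_ext; auto.
Qed.

Lemma Sm_S n : forall f, Sm (S n) f -> Sm n f.
Proof.
  induction n as [|n IH]; intros f [H1 H2]; split; auto.
Qed.

Lemma Sm_ex n f : Sm n f -> forall x, ex_derive f x.
Proof. destruct n; intros [H _]; auto. Qed.

Lemma Sm_D n f : Sm (S n) f -> Sm n (Derive f).
Proof. intros [_ H]; exact H. Qed.

Lemma Sm_const n c : Sm n (fun _ => c).
Proof.
  revert c; induction n as [|n IH]; intro c; split; auto; try (intro; apply ex_derive_const).
  apply (Sm_ext n (fun _ => 0)). intro x; rewrite Derive_const; auto. apply IH.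
Qed.

Lemma Sm_plus n : forall f g, Sm n f -> Sm n g -> Sm n (fun x => f x + g x).
Proof.
  induction n as [|n IH]; intros f g Hf Hg; split.
  - intro x; apply (ex_derive_plus f g); eapply Sm_ex; eauto.
  - exact I.
  - intro x; apply (ex_derive_plus f g); eapply Sm_ex; eauto.
  - apply (Sm_ext n (fun x => Derive f x + Derive g x)).
    + intro x; rewrite Derive_plus; auto; eapply Sm_ex; eauto.
    + apply IH; apply Sm_D; auto.
Qed.

Lemma Sm_opp n : forall f, Sm n f -> Sm n (fun x => - f x).
Proof.
  induction n as [|n IH]; intros f Hf; split.
  - intro x; apply (ex_derive_opp f); eapply Sm_ex; eauto.
  - exact I.
  - intro x; apply (ex_derive_opp f); eapply Sm_ex; eauto.
  - apply (Sm_ext n (fun x => - Derive f x)).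
    + intro x; rewrite Derive_opp; auto.
    + apply IH; apply Sm_D; auto.
Qed.

Lemma Sm_minus n f g : Sm n f -> Sm n g -> Sm n (fun x => f x - g x).
Proof. intros; apply Sm_plus; auto; apply Sm_opp; auto. Qed.

Lemma Sm_mult n : forall f g, Sm n f -> Sm n g -> Sm n (fun x => f x * g x).
Proof.
  induction n as [|n IH]; intros f g Hf Hg; split.
  - intro x; apply ex_derive_mult; eapply Sm_ex; eauto.
  - exact I.
  - intro x; apply ex_derive_mult; eapply Sm_ex; eauto.
  - apply (Sm_ext n (fun x => Derive f x * g x + f x * Derive g x)).
    + intro x; rewrite Derive_mult; auto; eapply Sm_ex; eauto.
    + apply Sm_plus; apply IH; auto using Sm_D, Sm_S.
Qed.

Lemma Sm_inv n : forall f, Sm n f -> (forall x, f x <> 0) -> Sm n (fun x => / f x).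
Proof.
  induction n as [|n IH]; intros f Hf Hnz; split.
  - intro x; apply ex_derive_inv; auto; eapply Sm_ex; eauto.
  - exact I.
  - intro x; apply ex_derive_inv; auto; eapply Sm_ex; eauto.
  - apply (Sm_ext n (fun x => - (Derive f x * (/ f x * / f x)))).
    + intro x; rewrite Derive_inv; auto. field; auto. eapply Sm_ex; eauto.
    + apply Sm_opp, Sm_mult; auto using Sm_D. apply Sm_mult; apply IH; auto using Sm_S.
Qed.

Lemma Sm_sqrt n : forall f, Sm n f -> (forall x, 0 < f x) -> Sm n (fun x => sqrt (f x)).
Proof.
  induction n as [|n IH]; intros f Hf Hp.
  - split; auto. intro x. eexists. apply is_derive_sqrt; auto.
    apply Derive_correct; eapply Sm_ex; eauto.
  - split. intro x. eexists. apply is_derive_sqrt; auto.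
    apply Derive_correct; eapply Sm_ex; eauto.
    apply (Sm_ext n (fun x => Derive f x * / (2 * sqrt (f x)))).
    + intro x. symmetry. apply is_derive_unique.
      apply is_derive_sqrt; auto. apply Derive_correct; eapply Sm_ex; eauto.
    + apply Sm_mult; auto using Sm_D. apply Sm_inv.
      apply Sm_mult; auto using Sm_const. apply IH; auto using Sm_S.
      intro x. specialize (Hp x). apply Rmult_integral_contrapositive; split; try lra.
      apply Rgt_not_eq, sqrt_lt_R0; auto.
Qed.

Lemma Per_Derive f : Per f -> Per (Derive f).
Proof.
  intros H x. unfold Derive. f_equal. apply Lim_ext. intro h.
  replace (x + 1 + h) with ((x + h) + 1) by ring. rewrite !H; auto.
Qed.

Lemma Good_Derive f : Good f -> Good (fun x => Derive f x).
Proof. intros [H1 H2]; split. intro n; apply Sm_D; apply H1. apply Per_Derive; auto. Qed.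
Lemma Good_plus f g : Good f -> Good g -> Good (fun x => f x + g x).
Proof. intros [H1 H2] [H3 H4]; split. intro n; apply Sm_plus; auto. intro x; rewrite H2, H4; auto. Qed.
Lemma Good_minus f g : Good f -> Good g -> Good (fun x => f x - g x).
Proof. intros [H1 H2] [H3 H4]; split. intro n; apply Sm_minus; auto. intro x; rewrite H2, H4; auto. Qed.
Lemma Good_opp f : Good f -> Good (fun x => - f x).
Proof. intros [H1 H2]; split. intro n; apply Sm_opp; auto. intro x; rewrite H2; auto. Qed.
Lemma Good_mult f g : Good f -> Good g -> Good (fun x => f x * g x).
Proof. intros [H1 H2] [H3 H4]; split. intro n; apply Sm_mult; auto. intro x; rewrite H2, H4; auto. Qed.
Lemma Good_inv f : Good f -> (forall x, f x <> 0) -> Good (fun x => / f x).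
Proof. intros [H1 H2] Hz; split. intro n; apply Sm_inv; auto. intro x; rewrite H2; auto. Qed.
Lemma Good_div f g : Good f -> Good g -> (forall x, g x <> 0) -> Good (fun x => f x / g x).
Proof. intros. unfold Rdiv. apply Good_mult; auto. apply Good_inv; auto. Qed.
Lemma Good_sqrt f : Good f -> (forall x, 0 < f x) -> Good (fun x => sqrt (f x)).
Proof. intros [H1 H2] Hz; split. intro n; apply Sm_sqrt; auto. intro x; rewrite H2; auto. Qed.

Lemma deriv_left_nonneg f t D d : is_derive f t D -> 0 < d ->
  (forall s, t - d < s < t -> f s <= f t) -> 0 <= D.
Proof.
  intros HD Hd H. apply is_derive_Reals in HD.
  destruct (Rle_or_lt 0 D) as [|HDn]; auto. exfalso.
  destruct (HD (- D) ltac:(lra)) as [[e He] Hx].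
  set (h := - (Rmin d e) / 2).
  assert (Hm1 : Rmin d e <= d) by apply Rmin_l.
  assert (Hm2 : Rmin d e <= e) by apply Rmin_r.
  assert (Hm3 : 0 < Rmin d e) by (apply Rmin_pos; lra).
  assert (Hh : h < 0) by (unfold h; lra).
  specialize (Hx h ltac:(lra)). simpl in Hx.
  assert (Habs : Rabs h < e) by (rewrite Rabs_left; unfold h; lra).
  specialize (Hx Habs). specialize (H (t + h) ltac:(unfold h; lra)).
  apply Rabs_def2 in Hx. destruct Hx as [Hx1 Hx2].
  assert (Q : (f (t + h) - f t) / h < 0) by lra.
  assert (Q2 : 0 <= (f (t + h) - f t) / h).
  { unfold Rdiv. replace ((f (t + h) - f t) * / h) with ((f t - f (t+h)) * / (- h)).
    apply Rmult_le_pos; try lra. left; apply Rinv_0_lt_compat; lra.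
    field; lra. }
  lra.
Qed.

Lemma deriv_right_nonpos f t D d : is_derive f t D -> 0 < d ->
  (forall s, t < s < t + d -> f s <= f t) -> D <= 0.
Proof.
  intros HD Hd H. apply is_derive_Reals in HD.
  destruct (Rle_or_lt D 0) as [|HDn]; auto. exfalso.
  destruct (HD D ltac:(lra)) as [[e He] Hx].
  set (h := (Rmin d e) / 2).
  assert (Hm1 : Rmin d e <= d) by apply Rmin_l.
  assert (Hm2 : Rmin d e <= e) by apply Rmin_r.
  assert (Hm3 : 0 < Rmin d e) by (apply Rmin_pos; lra).
  assert (Hh : 0 < h) by (unfold h; lra).
  specialize (Hx h ltac:(lra)). simpl in Hx.
  assert (Habs : Rabs h < e) by (rewrite Rabs_right; unfold h; lra).
  specialize (Hx Habs). specialize (H (t + h) ltac:(unfold h; lra)).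
  apply Rabs_def2 in Hx. destruct Hx as [Hx1 Hx2].
  assert (Q : 0 < (f (t + h) - f t) / h) by lra.
  assert (Q2 : (f (t + h) - f t) / h <= 0).
  { unfold Rdiv. replace ((f (t + h) - f t) * / h) with (- ((f t - f (t+h)) * / h)) by (field; lra).
    assert (0 <= (f t - f (t+h)) * / h); try lra.
    apply Rmult_le_pos; try lra. left; apply Rinv_0_lt_compat; lra. }
  lra.
Qed.

Lemma max_D0 f p : (forall x, ex_derive f x) -> (forall q, f q <= f p) -> Derive f p = 0.
Proof.
  intros He Hm. assert (HD := Derive_correct f p (He p)).
  apply Rle_antisym.
  - apply (deriv_right_nonpos f p _ 1); auto; lra.
  - apply (deriv_left_nonneg f p _ 1); auto; lra.
Qed.

Lemma max_D2 f p : (forall x, ex_derive f x) -> ex_derive (Derive f) p ->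
  (forall q, f q <= f p) -> Derive (Derive f) p <= 0.
Proof.
  intros He He2 Hm. assert (H0 := max_D0 f p He Hm).
  assert (HD := Derive_correct _ p He2). set (D2 := Derive (Derive f) p) in *.
  destruct (Rle_or_lt D2 0) as [|Hpos]; auto. exfalso.
  apply is_derive_Reals in HD.
  destruct (HD D2 Hpos) as [[e He'] Hx]. simpl in Hx.
  set (h := e / 2).
  assert (Hpos' : forall c, p < c < p + e -> 0 < Derive f c).
  { intros c Hc. specialize (Hx (c - p) ltac:(lra)).
    rewrite Rabs_right in Hx by lra. specialize (Hx ltac:(lra)).
    replace (p + (c - p)) with c in Hx by ring. rewrite H0 in Hx.
    apply Rabs_def2 in Hx. destruct Hx as [_ Hx].
    assert (0 < (Derive f c - 0) / (c - p)) by lra.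
    unfold Rdiv in H. rewrite Rminus_0_r in H.
    assert (Hc' : 0 < c - p) by lra.
    destruct (Rle_or_lt (Derive f c) 0) as [Hle|]; auto.
    exfalso. assert (Derive f c * / (c - p) <= 0); try lra.
    rewrite <- (Rmult_0_l (/ (c - p))). apply Rmult_le_compat_r; try lra.
    left; apply Rinv_0_lt_compat; lra. }
  destruct (MVT_cor2 f (Derive f) p (p + h)) as [c [Hc1 Hc2]].
  - unfold h; lra.
  - intros c Hc. apply is_derive_Reals, Derive_correct, He.
  - specialize (Hpos' c ltac:(unfold h in *; lra)).
    specialize (Hm (p + h)).
    assert (0 < Derive f c * (p + h - p)) by (apply Rmult_lt_0_compat; unfold h; lra).
    lra.
Qed.

Definition PhiE (x0 x1 x2 x3 y0 y1 y2 y3 : R) : R :=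
  let A := x1 * y2 - y1 * x2 in
  let B := x0 * y1 - y0 * x1 in
  let dA := x2 * y2 + x1 * y3 - (y2 * x2 + y1 * x3) in
  let dB := x1 * y1 + x0 * y2 - (y1 * x1 + y0 * x2) in
  let r := A / B in
  let dr := (dA * B - A * dB) / (B * B) in
  let g := sqrt r in
  let dg := dr / (2 * g) in
  let dcx := (x2 * g - x1 * dg) / (g * g) in
  let dcy := (y2 * g - y1 * dg) / (g * g) in
  ((dcx / g) * y0 - (dcy / g) * x0) / ((x1 / g) * y0 - (y1 / g) * x0).

Lemma quot_deriv (u A B : R -> R) p du dA dB :
  is_derive u p du -> is_derive A p dA -> is_derive B p dB -> B p <> 0 -> 0 < A p / B p ->
  Derive (fun q => u q / sqrt (A q / B q)) p =
   (du * sqrt (A p / B p) - u p * (((dA * B p - A p * dB) / (B p * B p)) / (2 * sqrt (A p / B p))))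
     / (sqrt (A p / B p) * sqrt (A p / B p)).
Proof.
  intros Hu HA HB HBz Hr.
  assert (Hg : 0 < sqrt (A p / B p)) by (apply sqrt_lt_R0; auto).
  apply is_derive_unique. unfold Rdiv at 1.
  auto_derive.
  - repeat split; try (eexists; eauto); auto; lra.
  - replace (Derive (fun x => u x) p) with du by (symmetry; apply is_derive_unique; exact Hu).
    replace (Derive (fun x => A x) p) with dA by (symmetry; apply is_derive_unique; exact HA).
    replace (Derive (fun x => B x) p) with dB by (symmetry; apply is_derive_unique; exact HB).
    unfold Rdiv. field. split; auto; lra.
Qed.

Lemma isd_AB (f1 f2 g1 g2 : R -> R) df1 df2 dg1 dg2 p :
  is_derive f1 p df1 -> is_derive f2 p df2 -> is_derive g1 p dg1 -> is_derive g2 p dg2 ->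
  is_derive (fun q => f1 q * f2 q - g1 q * g2 q) p (df1 * f2 p + f1 p * df2 - (dg1 * g2 p + g1 p * dg2)).
Proof.
  intros H1 H2 H3 H4. auto_derive.
  - repeat split; eexists; eauto.
  - replace (Derive (fun x => f1 x) p) with df1 by (symmetry; apply is_derive_unique; exact H1).
    replace (Derive (fun x => f2 x) p) with df2 by (symmetry; apply is_derive_unique; exact H2).
    replace (Derive (fun x => g1 x) p) with dg1 by (symmetry; apply is_derive_unique; exact H3).
    replace (Derive (fun x => g2 x) p) with dg2 by (symmetry; apply is_derive_unique; exact H4).
    ring.
Qed.

Lemma key0 (a0 a1 a2 a3 b0 b1 b2 b3 : R -> R) p :
  (forall q, is_derive a0 q (a1 q)) -> (forall q, is_derive a1 q (a2 q)) -> (forall q, is_derive a2 q (a3 q)) ->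
  (forall q, is_derive b0 q (b1 q)) -> (forall q, is_derive b1 q (b2 q)) -> (forall q, is_derive b2 q (b3 q)) ->
  (a0 p * b1 p - b0 p * a1 p <> 0) ->
  (0 < (a1 p * b2 p - b1 p * a2 p) / (a0 p * b1 p - b0 p * a1 p)) ->
  (Derive (fun q => a1 q / sqrt ((a1 q * b2 q - b1 q * a2 q) / (a0 q * b1 q - b0 q * a1 q))) p
     / sqrt ((a1 p * b2 p - b1 p * a2 p) / (a0 p * b1 p - b0 p * a1 p)) * b0 p
   - Derive (fun q => b1 q / sqrt ((a1 q * b2 q - b1 q * a2 q) / (a0 q * b1 q - b0 q * a1 q))) p
     / sqrt ((a1 p * b2 p - b1 p * a2 p) / (a0 p * b1 p - b0 p * a1 p)) * a0 p)
  / (a1 p / sqrt ((a1 p * b2 p - b1 p * a2 p) / (a0 p * b1 p - b0 p * a1 p)) * b0 p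
     - b1 p / sqrt ((a1 p * b2 p - b1 p * a2 p) / (a0 p * b1 p - b0 p * a1 p)) * a0 p)
  = PhiE (a0 p) (a1 p) (a2 p) (a3 p) (b0 p) (b1 p) (b2 p) (b3 p).
Proof.
  intros Ha0 Ha1 Ha2 Hb0 Hb1 Hb2 HB Hr.
  assert (HdA : is_derive (fun q => a1 q * b2 q - b1 q * a2 q) p
     (a2 p * b2 p + a1 p * b3 p - (b2 p * a2 p + b1 p * a3 p))) by (apply isd_AB; auto).
  assert (HdB : is_derive (fun q => a0 q * b1 q - b0 q * a1 q) p
     (a1 p * b1 p + a0 p * b2 p - (b1 p * a1 p + b0 p * a2 p))) by (apply isd_AB; auto).
  rewrite (quot_deriv a1 _ _ p (a2 p) _ _ (Ha1 p) HdA HdB HB Hr).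
  rewrite (quot_deriv b1 _ _ p (b2 p) _ _ (Hb1 p) HdA HdB HB Hr).
  reflexivity.
Qed.

Lemma key (a0 b0 : R -> R) p :
  (forall q, ex_derive a0 q) -> (forall q, ex_derive (Derive a0) q) -> (forall q, ex_derive (Derive (Derive a0)) q) ->
  (forall q, ex_derive b0 q) -> (forall q, ex_derive (Derive b0) q) -> (forall q, ex_derive (Derive (Derive b0)) q) ->
  (a0 p * Derive b0 p - b0 p * Derive a0 p <> 0) ->
  (0 < (Derive a0 p * Derive (Derive b0) p - Derive b0 p * Derive (Derive a0) p)
        / (a0 p * Derive b0 p - b0 p * Derive a0 p)) ->
  ca_curv (fun q s => (a0 q, b0 q)) p 0 =
  PhiE (a0 p) (Derive a0 p) (Derive (Derive a0) p) (Derive (Derive (Derive a0)) p)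
       (b0 p) (Derive b0 p) (Derive (Derive b0) p) (Derive (Derive (Derive b0)) p).
Proof.
  intros. apply (key0 a0 (Derive a0) (Derive (Derive a0)) (Derive (Derive (Derive a0)))
                      b0 (Derive b0) (Derive (Derive b0)) (Derive (Derive (Derive b0))));
  auto; intro q; apply Derive_correct; auto.
Qed.

Lemma denom_nz x0 x1 y0 y1 g : 0 < g -> x0 * y1 - y0 * x1 <> 0 -> x1 / g * y0 - y1 / g * x0 <> 0.
Proof.
  intros Hg H E. apply H.
  replace (x0 * y1 - y0 * x1) with (- (x1 / g * y0 - y1 / g * x0) * g) by (field; lra).
  rewrite E; ring.
Qed.

Definition P2 (F : R -> R -> R) p t :=
  continuous (fun z : R * R => F (fst z) (snd z)) (p, t) /\ ex_derive (fun s => F p s) t.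

Lemma P2_plus F G p t : P2 F p t -> P2 G p t -> P2 (fun p t => F p t + G p t) p t.
Proof.
  intros [H1 H2] [H3 H4]; split.
  - exact (continuous_plus (fun z : R * R => F (fst z) (snd z)) (fun z : R * R => G (fst z) (snd z)) (p, t) H1 H3).
  - exact (ex_derive_plus (fun s => F p s) (fun s => G p s) t H2 H4).
Qed.
Lemma P2_minus F G p t : P2 F p t -> P2 G p t -> P2 (fun p t => F p t - G p t) p t.
Proof.
  intros [H1 H2] [H3 H4]; split.
  - exact (continuous_minus (fun z : R * R => F (fst z) (snd z)) (fun z : R * R => G (fst z) (snd z)) (p, t) H1 H3).
  - exact (ex_derive_minus (fun s => F p s) (fun s => G p s) t H2 H4).
Qed.
Lemma P2_mult F G p t : P2 F p t -> P2 G p t -> P2 (fun p t => F p t * G p t) p t.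
Proof.
  intros [H1 H2] [H3 H4]; split.
  - exact (continuous_mult (fun z : R * R => F (fst z) (snd z)) (fun z : R * R => G (fst z) (snd z)) (p, t) H1 H3).
  - exact (ex_derive_mult (fun s => F p s) (fun s => G p s) t H2 H4).
Qed.
Lemma P2_inv F p t : P2 F p t -> F p t <> 0 -> P2 (fun p t => / F p t) p t.
Proof.
  intros [H1 H2] Hz; split.
  - exact (continuous_comp (fun z : R * R => F (fst z) (snd z)) (fun x => / x) (p, t) H1 (continuous_Rinv _ Hz)).
  - exact (ex_derive_inv (fun s => F p s) t H2 Hz).
Qed.
Lemma P2_div F G p t : P2 F p t -> P2 G p t -> G p t <> 0 -> P2 (fun p t => F p t / G p t) p t.
Proof. intros. unfold Rdiv. apply P2_mult; auto. apply P2_inv; auto. Qed.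
Lemma P2_sqrt F p t : P2 F p t -> 0 < F p t -> P2 (fun p t => sqrt (F p t)) p t.
Proof.
  intros [H1 H2] Hz; split.
  - exact (continuous_comp (fun z : R * R => F (fst z) (snd z)) sqrt (p, t) H1 (continuous_sqrt _)).
  - eexists. apply is_derive_sqrt; auto. apply Derive_correct; auto.
Qed.
Lemma P2_const c p t : P2 (fun _ _ => c) p t.
Proof. split. apply continuous_const. apply ex_derive_const. Qed.

Definition dk (C : R -> R -> R * R) k := pd (repeat true k) (fun p t => fst (C p t)).
Definition ek (C : R -> R -> R * R) k := pd (repeat true k) (fun p t => snd (C p t)).

Definition Phi C p t := PhiE (dk C 0 p t) (dk C 1 p t) (dk C 2 p t) (dk C 3 p t)
                             (ek C 0 p t) (ek C 1 p t) (ek C 2 p t) (ek C 3 p t).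

Lemma P2_Phi C p t :
  (forall k, P2 (dk C k) p t) -> (forall k, P2 (ek C k) p t) ->
  dk C 0 p t * ek C 1 p t - ek C 0 p t * dk C 1 p t <> 0 ->
  0 < (dk C 1 p t * ek C 2 p t - ek C 1 p t * dk C 2 p t) / (dk C 0 p t * ek C 1 p t - ek C 0 p t * dk C 1 p t) ->
  P2 (Phi C) p t.
Proof.
  intros Hd He HB Hr. unfold Phi, PhiE. cbv beta zeta.
  assert (Hg : 0 < sqrt ((dk C 1 p t * ek C 2 p t - ek C 1 p t * dk C 2 p t) / (dk C 0 p t * ek C 1 p t - ek C 0 p t * dk C 1 p t))) by (apply sqrt_lt_R0; auto).
  repeat match goal with
  | |- P2 (fun p t => @?a p t / @?b p t) _ _ => apply (P2_div a b)
  | |- P2 (fun p t => @?a p t - @?b p t) _ _ => apply (P2_minus a b)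
  | |- P2 (fun p t => @?a p t + @?b p t) _ _ => apply (P2_plus a b)
  | |- P2 (fun p t => @?a p t * @?b p t) _ _ => apply (P2_mult a b)
  | |- P2 (fun p t => sqrt (@?a p t)) _ _ => apply (P2_sqrt a)
  | |- P2 (fun p t => dk C ?k p t) _ _ => apply (Hd k)
  | |- P2 (fun p t => ek C ?k p t) _ _ => apply (He k)
  | |- P2 (fun p t => 2) _ _ => apply P2_const
  end.
  all: first [exact HB | exact Hr | lra
    | (apply Rmult_integral_contrapositive_currified; first [exact HB | lra])
    | (apply denom_nz; [exact Hg | exact HB]) ].
Qed.



Lemma good_curv (a0 b0 : R -> R) : Good a0 -> Good b0 ->
  (forall x, a0 x * Derive b0 x - b0 x * Derive a0 x <> 0) ->
  (forall x, 0 < (Derive a0 x * Derive (Derive b0) x - Derive b0 x * Derive (Derive a0) x)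
        / (a0 x * Derive b0 x - b0 x * Derive a0 x)) ->
  Good (fun q => ca_curv (fun q s => (a0 q, b0 q)) q 0).
Proof.
  intros Ha Hb HB Hr. unfold ca_curv, Cxixi, Cxi, dxi, ca_metric, det2, dppv, dpv. simpl.
  repeat first [apply Good_div | apply Good_minus | apply Good_mult | apply Good_Derive | apply Good_sqrt | assumption ];
  try exact HB; try exact Hr; intro x; try (apply Rgt_not_eq, sqrt_lt_R0, Hr).
  apply denom_nz. apply sqrt_lt_R0, Hr. apply HB.
Qed.

Lemma good_metric (a0 b0 : R -> R) : Good a0 -> Good b0 ->
  (forall x, a0 x * Derive b0 x - b0 x * Derive a0 x <> 0) ->
  (forall x, 0 < (Derive a0 x * Derive (Derive b0) x - Derive b0 x * Derive (Derive a0) x)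
        / (a0 x * Derive b0 x - b0 x * Derive a0 x)) ->
  Good (fun q => ca_metric (fun q s => (a0 q, b0 q)) q 0) /\
  (forall q, 0 < ca_metric (fun q s => (a0 q, b0 q)) q 0).
Proof.
  intros Ha Hb HB Hr. unfold ca_metric, det2, dppv, dpv. simpl. split.
  - repeat first [apply Good_div | apply Good_minus | apply Good_mult | apply Good_Derive | apply Good_sqrt | assumption ];
    try exact HB; try exact Hr.
  - intro q; apply sqrt_lt_R0, Hr.
Qed.

Lemma dd_max f g p : (forall x, ex_derive f x) -> (forall x, ex_derive (Derive f) x) ->
  (forall x, ex_derive g x) -> (forall x, 0 < g x) -> (forall q, f q <= f p) ->
  Derive (fun q => Derive f q / g q) p / g p <= 0.
Proof.
  intros Hf Hf2 Hg Hgp Hm.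
  assert (H0 := max_D0 f p Hf Hm). assert (H2 := max_D2 f p Hf (Hf2 p) Hm).
  unfold Rdiv. rewrite Derive_mult; auto.
  2: apply ex_derive_inv; auto; apply Rgt_not_eq, Hgp.
  rewrite H0. assert (0 < / g p) by (apply Rinv_0_lt_compat, Hgp).
  replace ((Derive (Derive f) p * / g p + 0 * Derive (fun x => / g x) p) * / g p)
    with (Derive (Derive f) p * (/ g p * / g p)) by ring.
  assert (0 < / g p * / g p) by (apply Rmult_lt_0_compat; auto).
  rewrite <- (Rmult_0_l (/ g p * / g p)). apply Rmult_le_compat_r; lra.
Qed.

Lemma dd_min f g p : (forall x, ex_derive f x) -> (forall x, ex_derive (Derive f) x) ->
  (forall x, ex_derive g x) -> (forall x, 0 < g x) -> (forall q, f p <= f q) ->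
  0 <= Derive (fun q => Derive f q / g q) p / g p.
Proof.
  intros Hf Hf2 Hg Hgp Hm.
  assert (E : forall x, Derive (fun y => - f y) x = - Derive f x) by (intro; apply Derive_opp).
  assert (E2 : Derive (fun q => Derive (fun y => - f y) q / g q) p = - Derive (fun q => Derive f q / g q) p).
  { rewrite <- Derive_opp. apply Derive_ext. intro q. rewrite E. unfold Rdiv; ring. }
  assert (H' : Derive (fun q => Derive (fun y => - f y) q / g q) p / g p <= 0).
  { apply dd_max; auto.
    - intro x; apply (ex_derive_opp f); auto.
    - intro x. apply (ex_derive_ext (fun y => - Derive f y)). intro; rewrite E; auto.
      apply (ex_derive_opp (Derive f)); auto.
    - intro q; specialize (Hm q); lra. }
  rewrite E2 in H'. unfold Rdiv in *. lra.
Qed.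

Lemma Rball (x : R) (e : posreal) y : Rabs (y - x) < e -> ball x e y.
Proof. intro H. unfold ball; simpl. unfold AbsRing_ball, abs, minus, plus, opp; simpl. exact H. Qed.

Lemma cont2_eps (F : R -> R -> R) p t :
  continuous (fun z : R * R => F (fst z) (snd z)) (p, t) ->
  forall eps, 0 < eps -> exists d, 0 < d /\ forall q s, Rabs (q - p) < d -> Rabs (s - t) < d ->
    Rabs (F q s - F p t) < eps.
Proof.
  intros H eps He. apply filterlim_locally with (eps := mkposreal eps He) in H.
  destruct H as [d Hd]. exists d. split. apply cond_pos.
  intros q s H1 H2. specialize (Hd (q, s)). simpl in Hd.
  unfold AbsRing_ball, abs, minus, plus, opp in Hd; simpl in Hd.
  apply Hd. split; apply Rball; auto.
Qed.

Lemma cont2_p (F : R -> R -> R) p t :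
  continuous (fun z : R * R => F (fst z) (snd z)) (p, t) -> continuity_pt (fun q => F q t) p.
Proof.
  intro H. unfold continuity_pt, continue_in, limit1_in, limit_in. simpl. unfold R_dist.
  intros e He. destruct (cont2_eps F p t H e He) as [d [Hd Hd2]].
  exists d; split; auto. intros x [_ Hx]. apply Hd2; auto. rewrite Rminus_diag, Rabs_R0; auto.
Qed.

Lemma per_nat (f : R -> R) : (forall q, f (q + 1) = f q) ->
  forall n q, f (q + INR n) = f q /\ f (q - INR n) = f q.
Proof.
  intros H n. induction n as [|n IH]; intro q.
  - simpl. rewrite Rplus_0_r, Rminus_0_r; auto.
  - rewrite S_INR. split.
    + replace (q + (INR n + 1)) with ((q + INR n) + 1) by ring. rewrite H. apply IH.
    + rewrite <- (H (q - (INR n + 1))). replace (q - (INR n + 1) + 1) with (q - INR n) by ring.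
      apply IH.
Qed.

Lemma per_int (f : R -> R) : (forall q, f (q + 1) = f q) ->
  forall q, exists q', 0 <= q' <= 1 /\ f q' = f q.
Proof.
  intros H q. destruct (archimed q) as [A1 A2].
  exists (q - IZR (up q) + 1). split. lra.
  set (k := (up q - 1)%Z).
  replace (q - IZR (up q) + 1) with (q - IZR k) by (unfold k; rewrite minus_IZR; simpl; ring).
  destruct (Z.le_gt_cases 0 k) as [Hk|Hk].
  - destruct (IZN k Hk) as [n ->]. rewrite <- INR_IZR_INZ. apply per_nat; auto.
  - assert (Hk' : (0 <= - k)%Z) by lia. destruct (IZN _ Hk') as [n Hn].
    replace (IZR k) with (- INR n). replace (q - - INR n) with (q + INR n) by ring. apply per_nat; auto.
    rewrite INR_IZR_INZ, <- Hn, opp_IZR; ring.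
Qed.

Lemma maxprin (F : R -> R -> R) (T M0 : R) :
  (forall q t, 0 <= t < T -> F (q + 1) t = F q t) ->
  (forall p t, 0 <= t < T -> continuous (fun z : R * R => F (fst z) (snd z)) (p, t)) ->
  (forall p t, 0 < t < T -> (forall q, F q t <= F p t) -> 2 < F p t ->
      exists D, is_derive (fun s => F p s) t D /\ D < 0) ->
  (forall q, F q 0 <= M0) -> 2 <= M0 ->
  forall p t, 0 <= t < T -> F p t <= M0.
Proof.
  intros Hper Hcont Hder H0 HM0.
  assert (Hq : forall t, exists q0, 0 <= t < T -> (0 <= q0 <= 1 /\ forall q, F q t <= F q0 t)).
  { intro t. destruct (classic (0 <= t < T)) as [Ht|Ht].
    - destruct (continuity_ab_maj (fun q => F q t) 0 1 ltac:(lra)) as [q0 [Hq1 Hq2]].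
      + intros c _. apply cont2_p, Hcont; auto.
      + exists q0. intros _. split; auto. intro q.
        destruct (per_int (fun q => F q t) (fun q => Hper q t Ht) q) as [q' [Hq' E]].
        simpl in E. rewrite <- E. apply Hq1; auto.
    - exists 0. tauto. }
  destruct (choice _ Hq) as [qm Hqm].
  set (m := fun t => F (qm t) t).
  assert (Hmc : forall t, 0 <= t < T -> forall eps, 0 < eps -> exists d, 0 < d /\
     forall s, 0 <= s < T -> Rabs (s - t) < d -> Rabs (m s - m t) < eps).
  { intros t Ht eps He.
    destruct (cont2_eps F (qm t) t (Hcont _ _ Ht) eps He) as [d1 [Hd1 Hd1']].
    assert (Hg : forall q, exists d : posreal, 0 <= q <= 1 ->
       forall q' s, Rabs (q' - q) < d -> Rabs (s - t) < d -> F q' s < F q t + eps).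
    { intro q. destruct (classic (0 <= q <= 1)) as [Hq01|Hq01].
      - destruct (cont2_eps F q t (Hcont _ _ Ht) eps He) as [d [Hd Hd']].
        exists (mkposreal d Hd). intros _ q' s H1 H2. simpl in *.
        specialize (Hd' q' s H1 H2). apply Rabs_def2 in Hd'. lra.
      - exists (mkposreal 1 Rlt_0_1). tauto. }
    destruct (choice _ Hg) as [delta Hdelta].
    destruct (compactness_value_1d 0 1 delta) as [d2 Hd2].
    exists (Rmin d1 d2). split. apply Rmin_pos; auto. apply cond_pos.
    intros s Hs Hst.
    assert (Hm1 : Rmin d1 d2 <= d1) by apply Rmin_l.
    assert (Hm2 : Rmin d1 d2 <= d2) by apply Rmin_r.
    destruct (Hqm s Hs) as [Hs01 Hsmax]. destruct (Hqm t Ht) as [Ht01 Htmax].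
    apply Rabs_def1.
    - apply Rnot_le_lt. intro Hc. apply (Hd2 (qm s) Hs01). intros [u [Hu1 [Hu2 Hu3]]].
      assert (F (qm s) s < F u t + eps).
      { apply (Hdelta u Hu1); auto. lra. }
      specialize (Htmax u). unfold m in Hc. lra.
    - specialize (Hd1' (qm t) s). rewrite Rminus_diag, Rabs_R0 in Hd1'.
      specialize (Hd1' Hd1 ltac:(lra)). apply Rabs_def2 in Hd1'.
      specialize (Hsmax (qm t)). unfold m. lra. }
  intros p1 t1 Ht1. apply Rnot_lt_le. intro Hbad.
  set (m' := fun s => m (Rmax 0 s)).
  assert (Hm'c : forall c, 0 <= c <= t1 -> continuity_pt m' c).
  { intros c Hc. unfold continuity_pt, continue_in, limit1_in, limit_in. simpl. unfold R_dist.
    intros e He. destruct (Hmc c ltac:(lra) e He) as [d [Hd Hd']].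
    exists (Rmin d (T - t1)). split. apply Rmin_pos; lra.
    intros y [_ Hy].
    assert (Hm1 : Rmin d (T - t1) <= d) by apply Rmin_l.
    assert (Hm2 : Rmin d (T - t1) <= T - t1) by apply Rmin_r.
    unfold m'. rewrite (Rmax_right 0 c) by lra.
    apply Rabs_def2 in Hy.
    apply Hd'.
    - split. apply Rmax_l. apply Rmax_lub_lt; lra.
    - unfold Rmax; destruct (Rle_dec 0 y); apply Rabs_def1; lra. }
  destruct (continuity_ab_maj m' 0 t1 ltac:(lra) Hm'c) as [ts [Hts1 Hts2]].
  assert (Em' : forall s, 0 <= s -> m' s = m s) by (intros s Hs; unfold m'; rewrite Rmax_right; auto).
  assert (A1 : m' t1 <= m' ts) by (apply Hts1; lra).
  rewrite !Em' in A1 by lra.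
  destruct (Hqm t1 Ht1) as [_ Hmax1]. specialize (Hmax1 p1).
  assert (Hts0 : 0 < ts).
  { destruct (Rle_lt_or_eq_dec 0 ts) as [|E]; try lra. rewrite <- E in A1.
    specialize (H0 (qm 0)). unfold m in A1. lra. }
  assert (Htsr : 0 < ts < T) by lra.
  destruct (Hqm ts ltac:(lra)) as [_ Hmaxs].
  destruct (Hder (qm ts) ts Htsr Hmaxs) as [D [HD HDneg]].
  { unfold m in A1. lra. }
  assert (0 <= D); try lra.
  apply (deriv_left_nonneg _ ts D ts HD Hts0).
  intros s Hs. destruct (Hqm s ltac:(lra)) as [_ Hms].
  specialize (Hms (qm ts)).
  assert (m' s <= m' ts) by (apply Hts1; lra).
  rewrite !Em' in H by lra. unfold m in H. lra.
Qed.

Lemma cont2_t (F : R -> R -> R) p t :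
  continuous (fun z : R * R => F (fst z) (snd z)) (p, t) -> continuity_pt (fun s => F p s) t.
Proof.
  intro H. unfold continuity_pt, continue_in, limit1_in, limit_in. simpl. unfold R_dist.
  intros e He. destruct (cont2_eps F p t H e He) as [d [Hd Hd2]].
  exists d; split; auto. intros x [_ Hx]. apply Hd2; auto. rewrite Rminus_diag, Rabs_R0; auto.
Qed.

Lemma maxex (F : R -> R -> R) t : (forall q, F (q + 1) t = F q t) ->
  (forall p, continuous (fun z : R * R => F (fst z) (snd z)) (p, t)) ->
  exists q0, forall q, F q t <= F q0 t.
Proof.
  intros Hper Hc.
  destruct (continuity_ab_maj (fun q => F q t) 0 1 ltac:(lra)) as [q0 [Hq1 Hq2]].
  - intros c _. apply cont2_p, Hc; auto.
  - exists q0. intro q.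
    destruct (per_int (fun q => F q t) Hper q) as [q' [Hq' E]].
    simpl in E. rewrite <- E. apply Hq1; auto.
Qed.

Lemma nz_sign (f : R -> R) a b : a <= b -> (forall x, a <= x <= b -> continuity_pt f x) ->
  (forall x, a <= x <= b -> f x <> 0) -> 0 < f a * f b.
Proof.
  intros Hab Hc Hz. destruct (Rle_lt_or_eq_dec a b Hab) as [Hlt|E].
  - assert (Ha := Hz a ltac:(lra)). assert (Hb := Hz b ltac:(lra)).
    destruct (Rlt_or_le 0 (f a)) as [Pa|Pa]; destruct (Rlt_or_le 0 (f b)) as [Pb|Pb].
    + apply Rmult_lt_0_compat; auto.
    + exfalso. destruct (Ranalysis5.IVT_interv (fun x => - f x) a b) as [z [Hz1 Hz2]]; auto.
      * intros x Hx. apply (continuity_pt_opp f x), Hc; auto.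
      * lra.
      * assert (f b < 0) by lra. lra.
      * apply (Hz z Hz1). lra.
    + exfalso. destruct (Ranalysis5.IVT_interv f a b) as [z [Hz1 Hz2]]; auto.
      * assert (f a < 0) by lra. lra.
      * apply (Hz z Hz1). lra.
    + assert (f a < 0) by lra. assert (f b < 0) by lra. nra.
  - subst. assert (Ha := Hz b ltac:(lra)).
    destruct (Rlt_or_le 0 (f b)); [nra|]. assert (f b < 0) by lra. nra.
Qed.

Lemma div_pos_iff x y : y <> 0 -> (0 < x / y <-> 0 < x * y).
Proof.
  intro Hy. assert (Hyy : 0 < y * y) by (destruct (Rlt_or_le 0 y); nra).
  replace (x / y) with ((x * y) * / (y * y)) by (field; auto).
  assert (0 < / (y * y)) by (apply Rinv_0_lt_compat; auto).
  split; intro H0.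
  - destruct (Rlt_or_le 0 (x * y)); auto. exfalso. nra.
  - apply Rmult_lt_0_compat; auto.
Qed.

Lemma Rbar_min_le_l (x y : Rbar) : Rbar_le (Rbar_min x y) x.
Proof.
  destruct x as [x| |]; destruct y as [y| |]; simpl; auto; try apply Rmin_l; try lra.
Qed.

Lemma Rbar_max'_ge_l (x y : Rbar) : Rbar_le x (Rbar_max' x y).
Proof. unfold Rbar_max'. destruct (Rbar_le_dec x y); auto. apply Rbar_le_refl. Qed.

Lemma Rbar_upper (L : Rbar) m0 v : Rbar_le (Finite m0) L -> v <= Rmax 2 m0 ->
  Rbar_le (Finite v) (Rbar_max' (Finite 2) L).
Proof.
  intros H1 H2. unfold Rbar_max'. destruct (Rbar_le_dec (Finite 2) L) as [h|h].
  - destruct L as [l| |]; simpl in *; auto.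
    apply Rmax_Rle in H2. lra.
  - destruct L as [l| |]; simpl in *.
    + assert (l < 2) by lra. rewrite Rmax_left in H2; lra.
    + tauto.
    + tauto.
Qed.

Lemma Rbar_lower (G : Rbar) n0 v : Rbar_le G (Finite n0) -> Rmin (-2) n0 <= v ->
  Rbar_le (Rbar_min (Finite (-2)) G) (Finite v).
Proof.
  intros H1 H2. destruct G as [g| |]; simpl in *; auto; try tauto.
  unfold Rmin in *. destruct (Rle_dec (-2) g); destruct (Rle_dec (-2) n0); lra.
Qed.

Lemma locally_int t a b : a < t < b -> locally t (fun s => a < s < b).
Proof.
  intro H. assert (Hp : 0 < Rmin (t - a) (b - t)) by (apply Rmin_pos; lra).
  exists (mkposreal _ Hp). intros y Hy. simpl in Hy.
  unfold ball in Hy; simpl in Hy. unfold AbsRing_ball, abs, minus, plus, opp in Hy; simpl in Hy.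
  assert (Rmin (t - a) (b - t) <= t - a) by apply Rmin_l.
  assert (Rmin (t - a) (b - t) <= b - t) by apply Rmin_r.
  apply Rabs_def2 in Hy. lra.
Qed.

Lemma same_sign a b a0 b0 : 0 < a * a0 -> 0 < b * b0 -> (0 < a * b <-> 0 < a0 * b0).
Proof.
  intros H1 H2.
  assert (H : 0 < (a * b) * (a0 * b0)) by
    (replace ((a * b) * (a0 * b0)) with ((a * a0) * (b * b0)) by ring; apply Rmult_lt_0_compat; auto).
  split; intro H3.
  - destruct (Rlt_or_le 0 (a0 * b0)); auto. exfalso. nra.
  - destruct (Rlt_or_le 0 (a * b)); auto. exfalso. nra.
Qed.

Definition Af C p t := dk C 1 p t * ek C 2 p t - ek C 1 p t * dk C 2 p t.
Definition Bf C p t := dk C 0 p t * ek C 1 p t - ek C 0 p t * dk C 1 p t.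

Theorem lemma3p2 (C : R -> R -> R * R) (T : R) :
  (exists eps : R, 0 < eps /\
     smooth_on (fun _ t => - eps < t < T) (fun p t => fst (C p t)) /\
     smooth_on (fun _ t => - eps < t < T) (fun p t => snd (C p t))) ->
  (forall p t, 0 <= t < T -> C (p + 1) t = C p t) ->
  (forall p t, 0 <= t < T -> det2 (C p t) (dpv C p t) <> 0) ->
  (forall p t, 0 <= t < T -> det2 (dpv C p t) (dppv C p t) <> 0) ->
  (forall p t, 0 <= t < T ->
     Derive (fun s => ca_curv C p s) t =
       1 / 2 * dxi C (dxi C (ca_curv C)) p t
       - 1 / 2 * (ca_curv C p t) ^ 3 + 2 * ca_curv C p t) ->
  (exists M : R, forall p t, 0 <= t < T -> Rabs (ca_curv C p t) <= M) /\
  (forall p t, 0 <= t < T ->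
     Rbar_le (Rbar_min (Finite (-2)) (Glb_Rbar (fun y => exists q, y = ca_curv C q 0)))
             (Finite (ca_curv C p t)) /\
     Rbar_le (Finite (ca_curv C p t))
             (Rbar_max' (Finite 2) (Lub_Rbar (fun y => exists q, y = ca_curv C q 0)))).
Proof.
  intros [eps [Heps [HsX HsY]]] Hper HBnz HAnz Hev.
  destruct (Rlt_or_le 0 T) as [HT|HT].
  2:{ split. exists 0; intros; lra. intros; lra. }
  assert (HB : forall p t, 0 <= t < T -> Bf C p t <> 0) by exact HBnz.
  assert (HA : forall p t, 0 <= t < T -> Af C p t <> 0) by exact HAnz.
  assert (Hbase : forall k p t, - eps < t < T -> P2 (dk C k) p t /\ P2 (ek C k) p t).
  { intros k p t Ht. destruct (HsX (repeat true k) p t Ht) as [_ [H2 H3]].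
    destruct (HsY (repeat true k) p t Ht) as [_ [H5 H6]]. split; split; auto. }
  assert (HSm : forall t, - eps < t < T -> forall n k, Sm n (fun q => dk C k q t) /\ Sm n (fun q => ek C k q t)).
  { intros t Ht n. induction n as [|n IH]; intro k; split; split.
    - intro x; exact (proj1 (HsX (repeat true k) x t Ht)).
    - exact I.
    - intro x; exact (proj1 (HsY (repeat true k) x t Ht)).
    - exact I.
    - intro x; exact (proj1 (HsX (repeat true k) x t Ht)).
    - exact (proj1 (IH (S k))).
    - intro x; exact (proj1 (HsY (repeat true k) x t Ht)).
    - exact (proj2 (IH (S k))). }
  assert (Hgood0 : forall t, 0 <= t < T -> Good (fun q => fst (C q t)) /\ Good (fun q => snd (C q t))).
  { intros t Ht. split; split.
    - intro n; exact (proj1 (HSm t ltac:(lra) n 0%nat)).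
    - intro x; rewrite (Hper x t Ht); reflexivity.
    - intro n; exact (proj2 (HSm t ltac:(lra) n 0%nat)).
    - intro x; rewrite (Hper x t Ht); reflexivity. }
  assert (HcG : forall (G : R -> R -> R), (forall p t, 0 <= t < T -> P2 G p t) ->
            (forall p t, 0 <= t < T -> G p t <> 0) -> forall p t, 0 <= t < T -> 0 < G p t * G 0 0).
  { intros G HG Hz p t Ht.
    assert (H1 : 0 < G p t * G 0 t).
    { destruct (Rle_or_lt 0 p) as [Hp|Hp].
      - assert (X := nz_sign (fun q => G q t) 0 p Hp). simpl in X.
        rewrite Rmult_comm. apply X.
        + intros x _. apply cont2_p, (proj1 (HG x t Ht)).
        + intros x _. apply Hz; auto.
      - assert (X := nz_sign (fun q => G q t) p 0 ltac:(lra)). simpl in X.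
        apply X.
        + intros x _. apply cont2_p, (proj1 (HG x t Ht)).
        + intros x _. apply Hz; auto. }
    assert (H2 : 0 < G 0 0 * G 0 t).
    { apply (nz_sign (fun s => G 0 s) 0 t ltac:(lra)).
      + intros x Hx. apply cont2_t, (proj1 (HG 0 x ltac:(lra))).
      + intros x Hx. apply Hz; lra. }
    assert (Hc : 0 < G 0 t * G 0 t).
    { assert (G 0 t <> 0) by (apply Hz; auto). destruct (Rlt_or_le 0 (G 0 t)); [nra|].
      assert (G 0 t < 0) by lra. nra. }
    assert (0 < (G p t * G 0 0) * (G 0 t * G 0 t)) by (replace ((G p t * G 0 0) * (G 0 t * G 0 t)) with ((G p t * G 0 t) * (G 0 0 * G 0 t)) by ring; apply Rmult_lt_0_compat; auto).
    destruct (Rlt_or_le 0 (G p t * G 0 0)); auto. nra. }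
  assert (HP2A : forall p t, 0 <= t < T -> P2 (Af C) p t).
  { intros p t Ht. destruct (Hbase 1%nat p t ltac:(lra)), (Hbase 2%nat p t ltac:(lra)).
    unfold Af. apply P2_minus; apply P2_mult; auto. }
  assert (HP2B : forall p t, 0 <= t < T -> P2 (Bf C) p t).
  { intros p t Ht. destruct (Hbase 1%nat p t ltac:(lra)), (Hbase 0%nat p t ltac:(lra)).
    unfold Bf. apply P2_minus; apply P2_mult; auto. }
  assert (SA := HcG _ HP2A HA). assert (SB := HcG _ HP2B HB).
  assert (T0 : 0 <= 0 < T) by lra.
  assert (Hrel : forall p t, 0 <= t < T -> (0 < Af C p t / Bf C p t <-> 0 < Af C 0 0 / Bf C 0 0)).
  { intros p t Ht. rewrite !div_pos_iff by auto. apply same_sign; auto. }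
  destruct (Rlt_or_le 0 (Af C 0 0 / Bf C 0 0)) as [Hpos|Hneg].
  2:{ (* degenerate sign: phi = 0 *)
    assert (Hz : forall p t, 0 <= t < T -> ca_curv C p t = 0).
    { intros p t Ht.
      assert (Hm : ca_metric C p t = 0).
      { unfold ca_metric. apply sqrt_neg_0.
        destruct (Rlt_or_le 0 (Af C p t / Bf C p t)) as [h|h]; [|exact h].
        apply (Hrel p t Ht) in h. lra. }
      unfold ca_curv. replace (det2 (Cxi C p t) (C p t)) with 0.
      - unfold Rdiv; rewrite Rinv_0; ring.
      - unfold det2, Cxi, dxi. cbn [fst snd]. rewrite Hm. unfold Rdiv; rewrite Rinv_0; ring. }
    split.
    - exists 0. intros p t Ht. rewrite Hz, Rabs_R0 by auto. lra.
    - intros p t Ht. rewrite Hz by auto. split.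
      + eapply Rbar_le_trans. apply Rbar_min_le_l. simpl; lra.
      + eapply Rbar_le_trans. 2: apply Rbar_max'_ge_l. simpl; lra. }
  assert (Hr : forall p t, 0 <= t < T -> 0 < Af C p t / Bf C p t).
  { intros p t Ht. apply (Hrel p t Ht); auto. }
  assert (HE : forall p t, 0 <= t < T -> ca_curv C p t = Phi C p t).
  { intros p t Ht. destruct (Hgood0 t Ht) as [[Sa _] [Sb _]].
    destruct (Sa 2%nat) as [a0 [a1 [a2 _]]]. destruct (Sb 2%nat) as [b0 [b1 [b2 _]]].
    change (ca_curv C p t) with (ca_curv (fun q s => (fst (C q t), snd (C q t))) p 0).
    etransitivity.
    - apply key; [exact a0|exact a1|exact a2|exact b0|exact b1|exact b2|exact (HB p t Ht)|exact (Hr p t Ht)].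
    - reflexivity. }
  assert (HgC : forall t, 0 <= t < T -> Good (fun q => ca_curv C q t)).
  { intros t Ht. destruct (Hgood0 t Ht) as [Ga Gb].
    change (fun q => ca_curv C q t) with (fun q => ca_curv (fun q s => (fst (C q t), snd (C q t))) q 0).
    apply good_curv; auto. intro x; exact (HB x t Ht). intro x; exact (Hr x t Ht). }
  assert (HgM : forall t, 0 <= t < T -> Good (fun q => ca_metric C q t) /\ forall q, 0 < ca_metric C q t).
  { intros t Ht. destruct (Hgood0 t Ht) as [Ga Gb].
    change (fun q => ca_metric C q t) with (fun q => ca_metric (fun q s => (fst (C q t), snd (C q t))) q 0).
    change (forall q, 0 < ca_metric C q t) with (forall q, 0 < ca_metric (fun q s => (fst (C q t), snd (C q t))) q 0).
    apply good_metric; auto. intro x; exact (HB x t Ht). intro x; exact (Hr x t Ht). }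
  assert (HP2 : forall p t, 0 <= t < T -> P2 (Phi C) p t).
  { intros p t Ht. apply P2_Phi.
    - intro k; apply (Hbase k p t); lra.
    - intro k; apply (Hbase k p t); lra.
    - exact (HB p t Ht).
    - exact (Hr p t Ht). }
  assert (Hper' : forall q t, 0 <= t < T -> Phi C (q + 1) t = Phi C q t).
  { intros q t Ht. rewrite <- !HE by auto. apply (proj2 (HgC t Ht)). }
  assert (Hloc : forall p t, 0 < t < T -> locally t (fun s => Phi C p s = ca_curv C p s)).
  { intros p t Ht. eapply filter_imp; [|apply (locally_int t 0 T Ht)].
    intros s Hs. symmetry. apply HE. lra. }
  assert (Hdd1 : forall p t, 0 <= t < T -> (forall q, ca_curv C q t <= ca_curv C p t) ->
      dxi C (dxi C (ca_curv C)) p t <= 0).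
  { intros p t Ht Hm. destruct (HgC t Ht) as [Sf _]. destruct (HgM t Ht) as [[Sg _] Hgp].
    destruct (Sf 1%nat) as [f0 [f1 _]]. destruct (Sg 0%nat) as [g0 _].
    exact (dd_max (fun q => ca_curv C q t) (fun q => ca_metric C q t) p f0 f1 g0 Hgp Hm). }
  assert (Hdd2 : forall p t, 0 <= t < T -> (forall q, ca_curv C p t <= ca_curv C q t) ->
      0 <= dxi C (dxi C (ca_curv C)) p t).
  { intros p t Ht Hm. destruct (HgC t Ht) as [Sf _]. destruct (HgM t Ht) as [[Sg _] Hgp].
    destruct (Sf 1%nat) as [f0 [f1 _]]. destruct (Sg 0%nat) as [g0 _].
    exact (dd_min (fun q => ca_curv C q t) (fun q => ca_metric C q t) p f0 f1 g0 Hgp Hm). }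
  destruct (maxex (Phi C) 0 (fun q => Hper' q 0 T0) (fun p => proj1 (HP2 p 0 T0))) as [q0 Hq0].
  destruct (maxex (fun p t => - Phi C p t) 0 (fun q => f_equal Ropp (Hper' q 0 T0))
     (fun p => continuous_opp (fun z : R * R => Phi C (fst z) (snd z)) (p, 0) (proj1 (HP2 p 0 T0)))) as [q1 Hq1].
  set (m0 := Phi C q0 0). set (n0 := Phi C q1 0).
  assert (HU : forall p t, 0 <= t < T -> Phi C p t <= Rmax 2 m0).
  { apply maxprin.
    - exact Hper'.
    - intros p t Ht; exact (proj1 (HP2 p t Ht)).
    - intros p t Ht Hmax H2.
      assert (Ht' : 0 <= t < T) by lra.
      exists (Derive (fun s => Phi C p s) t). split.
      + apply Derive_correct, (proj2 (HP2 p t Ht')).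
      + replace (Derive (fun s => Phi C p s) t) with (Derive (fun s => ca_curv C p s) t) by (symmetry; apply Derive_ext_loc; exact (Hloc p t Ht)). rewrite (Hev p t Ht').
        assert (D := Hdd1 p t Ht' ltac:(intro q; rewrite !HE by auto; apply Hmax)).
        rewrite <- HE in H2 by auto. set (v := ca_curv C p t) in *.
        assert (0 < v * (v * v - 4)) by (apply Rmult_lt_0_compat; nra).
        simpl. nra.
    - intro q. apply Rle_trans with m0. apply Hq0. apply Rmax_r.
    - apply Rmax_l. }
  assert (HL : forall p t, 0 <= t < T -> - Phi C p t <= Rmax 2 (- n0)).
  { apply (maxprin (fun p t => - Phi C p t)).
    - intros q t Ht. rewrite Hper'; auto.
    - intros p t Ht; exact (continuous_opp (fun z : R * R => Phi C (fst z) (snd z)) (p, t) (proj1 (HP2 p t Ht))).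
    - intros p t Ht Hmax H2.
      assert (Ht' : 0 <= t < T) by lra.
      exists (- Derive (fun s => Phi C p s) t). split.
      + apply (is_derive_opp (fun s => Phi C p s)), Derive_correct, (proj2 (HP2 p t Ht')).
      + replace (Derive (fun s => Phi C p s) t) with (Derive (fun s => ca_curv C p s) t) by (symmetry; apply Derive_ext_loc; exact (Hloc p t Ht)). rewrite (Hev p t Ht').
        assert (D := Hdd2 p t Ht' ltac:(intro q; rewrite !HE by auto; specialize (Hmax q); simpl in Hmax; lra)).
        simpl in H2. rewrite <- HE in H2 by auto. set (v := ca_curv C p t) in *.
        assert (0 < (- v) * (v * v - 4)) by (apply Rmult_lt_0_compat; nra).
        simpl. nra.
    - intro q. apply Rle_trans with (- n0). apply Hq1. apply Rmax_r.
    - apply Rmax_l. }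
  assert (Hm0 : Rbar_le (Finite m0) (Lub_Rbar (fun y => exists q, y = ca_curv C q 0))).
  { apply (proj1 (Lub_Rbar_correct _)). exists q0. unfold m0. symmetry; apply HE; auto. }
  assert (Hn0 : Rbar_le (Glb_Rbar (fun y => exists q, y = ca_curv C q 0)) (Finite n0)).
  { apply (proj1 (Glb_Rbar_correct _)). exists q1. unfold n0. symmetry; apply HE; auto. }
  split.
  - exists (Rmax (Rmax 2 m0) (Rmax 2 (- n0))). intros p t Ht. rewrite HE by auto.
    specialize (HU p t Ht). specialize (HL p t Ht).
    assert (Rmax 2 m0 <= Rmax (Rmax 2 m0) (Rmax 2 (- n0))) by apply Rmax_l.
    assert (Rmax 2 (- n0) <= Rmax (Rmax 2 m0) (Rmax 2 (- n0))) by apply Rmax_r.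
    unfold Rabs; destruct (Rcase_abs (Phi C p t)); lra.
  - intros p t Ht. rewrite HE by auto. split.
    + apply (Rbar_lower _ n0); auto. specialize (HL p t Ht).
      unfold Rmin, Rmax in *. destruct (Rle_dec (-2) n0); destruct (Rle_dec 2 (- n0)); lra.
    + apply (Rbar_upper _ m0); auto.
Qed.
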